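(* Let $r\geq 5$ and $0\leq k\leq 15$. Then the edge set of $Q_{2^r}$ can be partitioned into the edge sets of $2^{r-1}-k$ Hamiltonian cycles (copies of $C_{2^{2^r}}$) of $Q_{2^r}$ and the edge set of a DVOP$[k]$ in $Q_{2^r}$.
   Context: $Q_q$ denotes the $q$-dimensional hypercube graph (vertices are $q$-tuples of $0$'s and $1$'s, adjacent iff they differ in exactly one coordinate). $C_N$ is the cycle on $N$ vertices. $P_k$ is the path with vertices $0,1,\dots,k$ and edges $\hat{j}$ joining $j-1$ and $j$. For a graph $G$, a DVOP$[k]$ is a family $\{p_v\}_{v\in V(G)}$ of embeddings $p_v:P_k\to G$ such that (a) $p_v(\hat{j})=p_{v'}(\hat{j'})$ implies $v=v'$ and $j=j'$, and (b) $p_v(0)=v$ for every $v$; its edge set is the union of the edge images of all $p_v$. *)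

(* Defs.v *)
From mathcomp Require Import all_boot.
Set Implicit Arguments. Unset Strict Implicit. Unset Printing Implicit Defensive.

Section Graphs.
Variables (T : finType) (adj : rel T).

Definition graph_edges : {set {set T}} :=
  [set e : {set T} | [exists x, exists y, adj x y && (e == [set x; y])]].

Definition path_emb (k : nat) (p : 'I_k.+1 -> T) : Prop :=
  injective p /\
  forall j : 'I_k, adj (p (widen_ord (leqnSn k) j)) (p (lift ord0 j)).

(* image of the edge \hat{j+1} (joining j and j+1) of P_k, for j : 'I_k *)
Definition path_edge (k : nat) (p : 'I_k.+1 -> T) (j : 'I_k) : {set T} :=
  [set p (widen_ord (leqnSn k) j); p (lift ord0 j)].

Definition is_dvop (k : nat) (P : T -> 'I_k.+1 -> T) : Prop :=
  (forall v, path_emb (P v)) /\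
  (forall v v' (j j' : 'I_k), path_edge (P v) j = path_edge (P v') j' ->
      v = v' /\ j = j') /\
  (forall v, P v ord0 = v).

Definition dvop_edges (k : nat) (P : T -> 'I_k.+1 -> T) : {set {set T}} :=
  [set path_edge (P v) j | v : T, j : 'I_k].

Definition cycle_emb (N : nat) (c : 'I_N -> T) : Prop :=
  injective c /\ forall i : 'I_N, adj (c i) (c (ordS i)).

Definition cycle_edges (N : nat) (c : 'I_N -> T) : {set {set T}} :=
  [set [set c i; c (ordS i)] | i : 'I_N].

Definition ham_cycle (c : 'I_#|T| -> T) : Prop := cycle_emb c.

End Graphs.

Definition cube (q : nat) : finType := {ffun 'I_q -> bool}.
Definition cube_adj (q : nat) : rel (cube q) :=
  fun x y => #|[set i | x i != y i]| == 1.

(* Main.v *)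
Require Import Defs.
From mathcomp Require Import all_boot.
From mathcomp Require Import zify.

Lemma succ_dm n N : 0 < N -> n %% N != N.-1 -> n.+1 %% N = (n %% N).+1 /\ n.+1 %/ N = n %/ N.
Proof.
move=> hN hr.
have lt : (n %% N).+1 < N by have := ltn_pmod n hN; lia.
have E : n.+1 = n %/ N * N + (n %% N).+1 by rewrite {1}(divn_eq n N) addnS.
by rewrite E modnMDl modn_small // divnMDl // (divn_small lt) addn0.
Qed.

Lemma succ_dm' n N : 0 < N -> n %% N = N.-1 -> n.+1 %% N = 0 /\ n.+1 %/ N = (n %/ N).+1.
Proof.
move=> hN hr.
have E : n.+1 = (n %/ N).+1 * N by rewrite {1}(divn_eq n N) hr mulSn addnC -addSn prednK.
by rewrite E modnMl mulnK.
Qed.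

Lemma mod_sq n N : 0 < N -> n %% (N * N) = (n %/ N %% N) * N + n %% N.
Proof.
move=> hN.
have E : n = (n %/ N %/ N) * (N * N) + ((n %/ N %% N) * N + n %% N).
  by rewrite mulnA addnA -mulnDl -divn_eq -divn_eq.
rewrite {1}E modnMDl modn_small //.
have h1 := ltn_pmod n hN; have h2 := ltn_pmod (n %/ N) hN.
have : (n %/ N %% N) * N <= N.-1 * N by rewrite leq_mul2r; lia.
have : N.-1 * N + N = N * N by nia.
move=> H1 H2; nia.
Qed.

Lemma mod_sq_eq n m N : 0 < N ->
  (n == m %[mod N * N]) = (n %/ N == m %/ N %[mod N]) && (n %% N == m %% N).
Proof.
move=> hN; rewrite !mod_sq //; apply/eqP/andP.
  move=> E; have E1 := f_equal (fun x => x %% N) E; have E2 := f_equal (fun x => x %/ N) E.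
  move: E1 E2 => /=; rewrite !modnMDl !modn_mod !divnMDl //.
  rewrite (divn_small (ltn_pmod _ hN)) (divn_small (ltn_pmod m hN)) !addn0.
  by move=> -> ->.
by case=> /eqP -> /eqP ->.
Qed.

Set Implicit Arguments. Unset Strict Implicit. Unset Printing Implicit Defensive.

Lemma set2_eq (T : finType) (a b c d : T) :
  [set a; b] = [set c; d] -> (a = c /\ b = d) \/ (a = d /\ b = c).
Proof.
move=> E.
have ha : a \in [set c; d] by rewrite -E set21.
have hb : b \in [set c; d] by rewrite -E set22.
have hc : c \in [set a; b] by rewrite E set21.
have hd : d \in [set a; b] by rewrite E set22.
move: ha hb hc hd => /set2P[]-> /set2P[]-> /set2P[]? /set2P[]?; subst; auto.
Qed.

Lemma mydisjP (T : finType) (A B : {set T}) :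
  (forall x, x \in A -> x \in B -> False) -> [disjoint A & B].
Proof.
move=> H; rewrite disjoint_subset; apply/subsetP => x hA; rewrite inE.
by apply/negP => hB; exact: (H x hA hB).
Qed.

Lemma disjF (T : finType) (A B : {set T}) x :
  [disjoint A & B] -> x \in A -> x \in B -> False.
Proof. by move=> D hA; rewrite (disjointFr D hA). Qed.

Section Gen.
Variables (T : finType) (adj : rel T).
Local Notation N := #|T|.

Definition hamn (g : nat -> T) :=
  (forall n, adj (g n) (g n.+1)) /\ (forall n m, (g n == g m) = (n == m %[mod N])).

Definition cedg (g : nat -> T) : {set {set T}} :=
  [set [set g (val i); g (val i).+1] | i : 'I_N].

Definition ledg (f : T -> T) : {set {set T}} := [set [set u; f u] | u : T].

Definition lvl (f : T -> T) :=
  injective f /\ (forall u, adj u (f u)) /\ (forall u, f (f u) != u).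

Fixpoint walkL (L : nat -> T -> T) (v : T) (n : nat) : T :=
  if n is n'.+1 then L n' (walkL L v n') else v.

Definition pos (g : nat -> T) (u : T) : nat :=
  if [pick i : 'I_N | g i == u] is Some i then val i else 0.

Definition hsucc (g : nat -> T) (u : T) : T := g (pos g u).+1.

Definition fam s (G : nat -> nat -> T) (L : nat -> T -> T) o :=
  if o < s then cedg (G o) else ledg (L (o - s)).

Definition Part n (F : nat -> {set {set T}}) :=
  (forall e, e \in graph_edges adj <-> exists2 o, o < n & e \in F o) /\
  (forall o o' e, o < n -> o' < n -> e \in F o -> e \in F o' -> o = o').

Definition Inv s t (G : nat -> nat -> T) (L : nat -> T -> T) :=
  forall v, (forall a b, a <= t -> b <= t -> walkL L v a = walkL L v b -> a = b) /\
   (forall j, j <= t -> hsucc (G s.-1) (walkL L v t) != walkL L v j /\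
      hsucc (G s.-1) (hsucc (G s.-1) (walkL L v t)) != walkL L v j).

Definition Dec s t G L :=
  [/\ 0 < s, 3 < N, (forall i, i < s -> hamn (G i)),
      (forall j, j < t -> lvl (L j)) &
      Part (s + t) (fam s G L) /\ Inv s t G L].

Section Ham.
Variable g : nat -> T.
Hypothesis hg : hamn g.

Lemma N_gt0 : 0 < N.
Proof. apply/card_gt0P; by exists (g 0). Qed.

Lemma ham_eq n m : (g n == g m) = (n == m %[mod N]).
Proof. by case: hg. Qed.

Lemma ham_mod n : g (n %% N) = g n.
Proof. by apply/eqP; rewrite ham_eq modn_mod. Qed.

Lemma ham_surj u : exists2 n, n < N & g n = u.
Proof.
pose f := fun i : 'I_N => g i.
have finj : injective f.
  move=> i j /eqP; rewrite /f ham_eq !modn_small ?ltn_ord // => /eqP; exact: val_inj.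
have : u \in codom f by apply: inj_card_onto => //; rewrite card_ord.
by case/codomP=> i ->; exists i.
Qed.

Lemma hsuccE n : hsucc g (g n) = g n.+1.
Proof.
rewrite /hsucc /pos; case: pickP => [i /eqP Hi|H].
  apply/eqP; rewrite ham_eq; move/eqP: Hi; rewrite ham_eq.
  by rewrite -addn1 -[n.+1]addn1 => /eqP E; rewrite -modnDml E modnDml.
case: (ham_surj (g n)) => m Hm Em.
by move: (H (Ordinal Hm)); rewrite /= Em eqxx.
Qed.


Lemma cedgP e : e \in cedg g <-> exists n, e = [set g n; g n.+1].
Proof.
split; first by case/imsetP=> i _ ->; exists i.
case=> n ->; apply/imsetP.
have lt : n %% N < N by rewrite ltn_mod N_gt0.
exists (Ordinal lt) => //=.
have E : g (n %% N).+1 = g n.+1 by apply/eqP; rewrite ham_eq -addn1 modnDml addn1.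
by rewrite ham_mod E.
Qed.

Lemma cedg_ledg : cedg g = ledg (hsucc g).
Proof.
apply/setP=> e; apply/idP/idP.
  by case/cedgP=> n ->; apply/imsetP; exists (g n) => //; rewrite hsuccE.
case/imsetP=> u _ ->; case: (ham_surj u) => n _ <-.
by apply/cedgP; exists n; rewrite hsuccE.
Qed.

Lemma ham_small a p p' : p < N -> p' < N -> g (a + p) = g (a + p') -> p = p'.
Proof.
move=> hp hp' /eqP; rewrite ham_eq eqn_modDl !modn_small // => /eqP //.
Qed.

Hypothesis N3 : 2 < N.

Lemma hsucc_ne u : hsucc g u != u /\ hsucc g (hsucc g u) != u.
Proof.
case: (ham_surj u) => n _ <-; rewrite !hsuccE; split; apply/negP=> /eqP.
  rewrite -addn1 -[X in _ = g X]addn0 => /ham_small H.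
  by have := H (ltnW N3) (ltnW (ltnW N3)).
rewrite -addn2 -[X in _ = g X]addn0 => /ham_small H.
by have := H N3 (ltnW (ltnW N3)).
Qed.

Lemma hsucc_lvl : lvl (hsucc g).
Proof.
split; last split.
- move=> u v; case: (ham_surj u) => n _ <-; case: (ham_surj v) => m _ <-.
  rewrite !hsuccE => /eqP; rewrite !ham_eq -addn1 -(addn1 m) eqn_modDr => H.
  by apply/eqP; rewrite ham_eq.
- by move=> u; case: (ham_surj u) => n _ <-; rewrite hsuccE; case: hg.
- by move=> u; case: (hsucc_ne u).
Qed.
End Ham.

Lemma geP e : reflect (exists x y, adj x y /\ e = [set x; y]) (e \in graph_edges adj).
Proof.
rewrite inE; apply: (iffP existsP) => [[x /existsP[y /andP[h /eqP ->]]]|[x [y [h ->]]]].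
  by exists x, y.
by exists x; apply/existsP; exists y; rewrite h eqxx.
Qed.

Lemma ge_adj x y : symmetric adj -> [set x; y] \in graph_edges adj -> adj x y.
Proof.
move=> sym /geP[u [v [h /set2_eq[[-> ->]|[-> ->]]]]] //; by rewrite sym.
Qed.

Lemma ge2 x y : adj x y -> [set x; y] \in graph_edges adj.
Proof. by move=> h; apply/geP; exists x, y. Qed.

End Gen.

Section Prod.
Variables (T : finType) (adj : rel T).
Hypothesis adj_sym : symmetric adj.
Hypothesis adj_irr : irreflexive adj.

Definition padj : rel (T * T) :=
  fun u v => (adj u.1 v.1 && (u.2 == v.2)) || ((u.1 == v.1) && adj u.2 v.2).

Definition xe (x x' y : T) : {set T * T} := [set (x, y); (x', y)].
Definition ye (x y y' : T) : {set T * T} := [set (x, y); (x, y')].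

Definition xlift (S : {set {set T}}) : {set {set T * T}} :=
  [set e | [exists x, exists x', exists y,
     [&& x != x', [set x; x'] \in S & e == xe x x' y]]].
Definition ylift (S : {set {set T}}) : {set {set T * T}} :=
  [set e | [exists x, exists y, exists y',
     [&& y != y', [set y; y'] \in S & e == ye x y y']]].

Lemma xliftP (S : {set {set T}}) e : reflect (exists x x' y, [/\ x != x', [set x; x'] \in S & e = xe x x' y])
  (e \in xlift S).
Proof.
rewrite inE; apply: (iffP existsP).
  by case=> x /existsP[x' /existsP[y /and3P[h1 h2 /eqP h3]]]; exists x, x', y.
case=> x [x' [y [h1 h2 h3]]]; exists x; apply/existsP; exists x'; apply/existsP; exists y.
by rewrite h1 h2 h3 eqxx.
Qed.

Lemma yliftP (S : {set {set T}}) e : reflect (exists x y y', [/\ y != y', [set y; y'] \in S & e = ye x y y'])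
  (e \in ylift S).
Proof.
rewrite inE; apply: (iffP existsP).
  by case=> x /existsP[y /existsP[y' /and3P[h1 h2 /eqP h3]]]; exists x, y, y'.
case=> x [y [y' [h1 h2 h3]]]; exists x; apply/existsP; exists y; apply/existsP; exists y'.
by rewrite h1 h2 h3 eqxx.
Qed.

Lemma xe_fst x x' y : [set z.1 | z in xe x x' y] = [set x; x'].
Proof. by rewrite /xe imsetU1 imset_set1. Qed.
Lemma ye_snd x y y' : [set z.2 | z in ye x y y'] = [set y; y'].
Proof. by rewrite /ye imsetU1 imset_set1. Qed.

Lemma xe_ye x x' y z w w' : xe x x' y = ye z w w' -> x = x'.
Proof.
move=> E.
have h1 : (x, y) \in ye z w w' by rewrite -E set21.
have h2 : (x', y) \in ye z w w' by rewrite -E set22.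
by move: h1 h2 => /set2P[][->] _ /set2P[][->].
Qed.

Lemma xlift_ylift (S S' : {set {set T}}) e : e \in xlift S -> e \in ylift S' -> False.
Proof.
case/xliftP=> x [x' [y [h1 _ ->]]] /yliftP[z [w [w' [_ _ E]]]].
by move/xe_ye: E => E; rewrite E eqxx in h1.
Qed.

Lemma xlift_meet (S S' : {set {set T}}) e : e \in xlift S -> e \in xlift S' ->
  exists f, f \in S /\ f \in S'.
Proof.
case/xliftP=> x [x' [y [_ h ->]]] /xliftP[z [z' [w [_ h' E]]]].
exists [set x; x']; split => //.
by rewrite -(xe_fst x x' y) E xe_fst.
Qed.

Lemma ylift_meet (S S' : {set {set T}}) e : e \in ylift S -> e \in ylift S' ->
  exists f, f \in S /\ f \in S'.
Proof.
case/yliftP=> x [y [y' [_ h ->]]] /yliftP[z [w [w' [_ h' E]]]].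
exists [set y; y']; split => //.
by rewrite -(ye_snd x y y') E ye_snd.
Qed.

Lemma xliftS (S S' : {set {set T}}) : S \subset S' -> xlift S \subset xlift S'.
Proof.
move=> /subsetP sub; apply/subsetP=> e /xliftP[x [x' [y [h1 h2 h3]]]].
by apply/xliftP; exists x, x', y; split => //; apply: sub.
Qed.

Lemma yliftS (S S' : {set {set T}}) : S \subset S' -> ylift S \subset ylift S'.
Proof.
move=> /subsetP sub; apply/subsetP=> e /yliftP[x [y [y' [h1 h2 h3]]]].
by apply/yliftP; exists x, y, y'; split => //; apply: sub.
Qed.

Lemma prod_edges : graph_edges padj = xlift (graph_edges adj) :|: ylift (graph_edges adj).
Proof.
apply/setP=> e; apply/idP/idP.
  case/geP=> [[x y] [[x' y'] [/orP[/andP[/= h /eqP <-]|/andP[/= /eqP <- h]] ->]]].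
    apply/setUP; left; apply/xliftP; exists x, x', y; split => //.
      by apply/negP=> /eqP E; rewrite E adj_irr in h.
    exact: ge2.
  apply/setUP; right; apply/yliftP; exists x, y, y'; split => //.
    by apply/negP=> /eqP E; rewrite E adj_irr in h.
  exact: ge2.
case/setUP.
  case/xliftP=> x [x' [y [_ h ->]]]; apply/geP; exists (x, y), (x', y); split => //.
  by rewrite /padj /= (ge_adj adj_sym h) eqxx.
case/yliftP=> x [y [y' [_ h ->]]]; apply/geP; exists (x, y), (x, y'); split => //.
by rewrite /padj /= (ge_adj adj_sym h) eqxx orbT.
Qed.

Lemma F_sub n (F : nat -> {set {set T}}) o : Part adj n F -> o < n ->
  F o \subset graph_edges adj.
Proof. by case=> cov _ ho; apply/subsetP=> e he; apply/cov; exists o. Qed.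

Lemma part_refine n (F : nat -> {set {set T}}) n2 (F2 : nat -> {set {set T * T}})
  (pi : nat -> nat * bool) (half : nat -> bool -> {set {set T * T}}) :
 Part adj n F ->
 (forall o2, o2 < n2 -> (pi o2).1 < n /\ F2 o2 = half (pi o2).1 (pi o2).2) ->
 (forall o2 o2', o2 < n2 -> o2' < n2 -> pi o2 = pi o2' -> o2 = o2') ->
 (forall o b, o < n -> exists2 o2, o2 < n2 & pi o2 = (o, b)) ->
 (forall o b, o < n -> half o b \subset xlift (F o) :|: ylift (F o)) ->
 (forall o, o < n -> xlift (F o) :|: ylift (F o) \subset half o false :|: half o true) ->
 (forall o, o < n -> [disjoint half o false & half o true]) ->
 Part padj n2 F2.
Proof.
move=> HP H1 H2 H3 H4 H5 H6; have [cov dis] := HP; split.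
- move=> e; split.
  + have getb : forall o, o < n -> e \in xlift (F o) :|: ylift (F o) ->
        exists2 o2, o2 < n2 & e \in F2 o2.
      move=> o ho he; have /subsetP/(_ e he)/setUP := H5 o ho.
      have aux : forall b, e \in half o b -> exists2 o2, o2 < n2 & e \in F2 o2.
        move=> b hb; case: (H3 o b ho) => o2 ho2 hp; exists o2 => //.
        by case: (H1 o2 ho2) => _ ->; rewrite hp.
      by case=> hb; [apply: (aux false) | apply: (aux true)].
    rewrite prod_edges => /setUP[] hx.
      case/xliftP: (hx) => x [x' [y [hn h Ee]]]; case/cov: h => o ho hf.
      apply: (getb o ho); apply/setUP; left; apply/xliftP; by exists x, x', y.
    case/yliftP: (hx) => x [y [y' [hn h Ee]]]; case/cov: h => o ho hf.
    apply: (getb o ho); apply/setUP; right; apply/yliftP; by exists x, y, y'.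
  + case=> o2 ho2 he; case: (H1 o2 ho2) => ho E; rewrite E in he.
    move/subsetP: (H4 _ (pi o2).2 ho) => /(_ e he) /setUP[] h; rewrite prod_edges; apply/setUP.
      by left; move/subsetP: (xliftS (F_sub HP ho)); apply.
    by right; move/subsetP: (yliftS (F_sub HP ho)); apply.
- move=> o2 o2' e ho2 ho2' he he'.
  case: (H1 o2 ho2) (H1 o2' ho2') => ho E [ho' E']; rewrite E in he; rewrite E' in he'.
  have eqo : (pi o2).1 = (pi o2').1.
    move/subsetP: (H4 _ (pi o2).2 ho) => /(_ e he) /setUP[] h;
    move/subsetP: (H4 _ (pi o2').2 ho') => /(_ e he') /setUP[] h'.
    - by case: (xlift_meet h h') => f [f1 f2]; apply: (dis _ _ f).
    - by case: (xlift_ylift h h').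
    - by case: (xlift_ylift h' h).
    - by case: (ylift_meet h h') => f [f1 f2]; apply: (dis _ _ f).
  apply: H2 => //.
  move: he he' eqo ho ho' (H6 _ ho); case: (pi o2) => o b; case: (pi o2') => o' b' /=.
  move=> he he' eo; subst o' => ho _ /disjoint_setI0 D.
  case: b b' he he' => [] [] he he' //;
  (have : e \in half o false :&: half o true by rewrite inE ?he ?he');
  by rewrite D inE.
Qed.

End Prod.


Section Torus.
Variables (T : finType) (adj : rel T).
Hypothesis adj_sym : symmetric adj.
Hypothesis adj_irr : irreflexive adj.
Variable g : nat -> T.
Hypothesis hg : hamn adj g.
Local Notation N := #|T|.
Hypothesis N3 : 3 < N.

Let N0 : 0 < N. Proof. exact: (N_gt0 g). Qed.

Definition c1 (n : nat) : T * T := (g (n %/ N), g (n %% N + N.-1 * (n %/ N))).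
Definition c2 (n : nat) : T * T := ((c1 n).2, (c1 n).1).

Lemma gE a b : (g a = g b) <-> (a = b %[mod N]).
Proof. split => [/eqP|E]; first by rewrite (ham_eq hg) => /eqP. by apply/eqP; rewrite (ham_eq hg) E. Qed.

Lemma gS x y : g x = g y -> g x.+1 = g y.+1.
Proof. move/gE=> E; apply/gE; by rewrite -addn1 -[y.+1]addn1 -modnDml E modnDml. Qed.

Lemma c1_step n : c1 n.+1 =
  if (n %/ N + (n %% N + N.-1 * (n %/ N))) %% N == N.-1
  then (g (n %/ N).+1, g (n %% N + N.-1 * (n %/ N)))
  else (g (n %/ N), g (n %% N + N.-1 * (n %/ N)).+1).
Proof.
have E : (n %/ N + (n %% N + N.-1 * (n %/ N))) %% N = n %% N.
  have -> : n %/ N + (n %% N + N.-1 * (n %/ N)) = n %/ N * N + n %% N.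
    by rewrite addnCA addnC -mulSn prednK // mulnC.
  by rewrite modnMDl modn_mod.
rewrite E; case: eqP => hr.
  case: (succ_dm' n N N0 hr) => h1 h2; rewrite /c1 h1 h2 add0n hr; congr pair.
  by rewrite mulnS addnC.
have /(succ_dm n N N0) [h1 h2] : n %% N != N.-1 by apply/eqP.
by rewrite /c1 h1 h2.
Qed.

Lemma c1_hit a b : exists n, c1 n = (g a, g b).
Proof.
exists (a * N + (b + a) %% N); rewrite /c1 divnMDl // divn_small ?ltn_pmod // addn0.
rewrite modnMDl modn_mod; congr pair; apply/gE.
rewrite modnDml.
have -> : b + a + N.-1 * a = a * N + b by have := N0; nia.
by rewrite modnMDl.
Qed.

Lemma c1_eq n m : (c1 n == c1 m) = (n == m %[mod N * N]).
Proof.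
rewrite (mod_sq_eq n m N N0) /c1 xpair_eqE !(ham_eq hg).
case E1 : (n %/ N == m %/ N %[mod N]) => //=.
move/eqP: E1 => E1.
have -> : (n %% N + N.-1 * (n %/ N) == m %% N + N.-1 * (m %/ N) %[mod N]) =
          (n %% N + N.-1 * (m %/ N) == m %% N + N.-1 * (m %/ N) %[mod N]).
  by rewrite -modnDmr -modnMmr E1 modnMmr modnDmr.
by rewrite eqn_modDr !modn_mod.
Qed.


Lemma card_TT : #|{: T * T}| = N * N.
Proof. by rewrite card_prod. Qed.

Lemma c1_ham : hamn (padj adj) c1.
Proof.
split; last by move=> n m; rewrite c1_eq card_TT.
move=> n; rewrite c1_step; case: ifP => _; rewrite /c1 /padj /= eqxx.
  by case: hg => ->.
by case: hg => -> _; rewrite orbT.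
Qed.

Lemma c1_succ a b : hsucc c1 (g a, g b) =
  if (a + b) %% N == N.-1 then (g a.+1, g b) else (g a, g b.+1).
Proof.
case: (c1_hit a b) => n En; rewrite -En (hsuccE c1_ham) c1_step.
move: En; rewrite /c1 => -[/gE Ea /gE Eb].
have -> : (n %/ N + (n %% N + N.-1 * (n %/ N))) %% N = (a + b) %% N.
  by rewrite -modnDm Ea Eb modnDm.
have Ea' : g (n %/ N) = g a by apply/gE.
have Eb' : g (n %% N + N.-1 * (n %/ N)) = g b by apply/gE.
by case: ifP => _; [rewrite (gS Ea') Eb' | rewrite (gS Eb') Ea'].
Qed.

Lemma padj_swap (u v : T * T) : padj adj (u.2, u.1) (v.2, v.1) = padj adj u v.
Proof. by rewrite /padj /= orbC; congr orb; apply: andbC. Qed.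

Lemma c2_ham : hamn (padj adj) c2.
Proof.
case: c1_ham => h1 h2; split.
  by move=> n; rewrite /c2 padj_swap.
by move=> n m; rewrite -h2 /c2 /c1 /= !xpair_eqE andbC.
Qed.

Lemma c2_succ a b : hsucc c2 (g a, g b) =
  if (a + b) %% N == N.-1 then (g a, g b.+1) else (g a.+1, g b).
Proof.
case: (c1_hit b a) => n En.
have E2 : c2 n = (g a, g b) by rewrite /c2 En.
rewrite -E2 (hsuccE c2_ham) {1}/c2.
have := c1_succ b a; rewrite -En (hsuccE c1_ham) addnC.
by case: ifP => _ ->.
Qed.

Lemma gneS a : g a != g a.+1.
Proof.
apply/negP=> /eqP; rewrite -[a.+1]addn1 -[X in g X = _]addn0 => /(ham_small hg) H.
by have := H (ltn_trans (isT : 0 < 3) N3) (ltn_trans (isT : 1 < 3) N3).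
Qed.

Lemma no_back a c : g a = g c.+1 -> g a.+1 = g c -> False.
Proof.
move=> E1 E2; have := gS E2; rewrite -E1 -[a.+2]addn2 -[X in _ = g X]addn0.
move/(ham_small hg) => H.
by have := H (ltn_trans (isT : 2 < 3) N3) (ltn_trans (isT : 0 < 3) N3).
Qed.

Let S1 := hsucc c1.
Let S2 := hsucc c2.

Lemma xe_sym (x x' y : T) : xe x x' y = xe x' x y.
Proof. by rewrite /xe setUC. Qed.
Lemma ye_sym (x y y' : T) : ye x y y' = ye x y' y.
Proof. by rewrite /ye setUC. Qed.

Lemma cedg_g a : [set g a; g a.+1] \in cedg g.
Proof. by apply/(cedgP hg); exists a. Qed.

Lemma step_sub (S : T * T -> T * T) :
  (forall a b, S (g a, g b) = (g a.+1, g b) \/ S (g a, g b) = (g a, g b.+1)) ->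
  ledg S \subset xlift (cedg g) :|: ylift (cedg g).
Proof.
move=> HS; apply/subsetP=> e /imsetP[[x y] _ ->].
case: (ham_surj hg x) => a _ <-; case: (ham_surj hg y) => b _ <-.
case: (HS a b) => ->; apply/setUP.
  by left; apply/xliftP; exists (g a), (g a.+1), (g b); split => //; [exact: gneS|exact: cedg_g].
by right; apply/yliftP; exists (g a), (g b), (g b.+1); split => //; [exact: gneS|exact: cedg_g].
Qed.

Lemma S1_sub : ledg S1 \subset xlift (cedg g) :|: ylift (cedg g).
Proof. by apply: step_sub => a b; rewrite /S1 c1_succ; case: ifP; auto. Qed.
Lemma S2_sub : ledg S2 \subset xlift (cedg g) :|: ylift (cedg g).
Proof. by apply: step_sub => a b; rewrite /S2 c2_succ; case: ifP; auto. Qed.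

Lemma tor_cover : xlift (cedg g) :|: ylift (cedg g) \subset ledg S2 :|: ledg S1.
Proof.
apply/subsetP=> e /setUP[].
  case/xliftP=> x [x' [y [_ /(cedgP hg)[n En] ->]]].
  have -> : xe x x' y = xe (g n) (g n.+1) y.
    by case/set2_eq: En => [[-> ->]|[-> ->]] //; rewrite xe_sym.
  case: (ham_surj hg y) => m _ <-; apply/setUP.
  case E : ((n + m) %% N == N.-1).
    by right; apply/imsetP; exists (g n, g m) => //; rewrite /S1 c1_succ E.
  by left; apply/imsetP; exists (g n, g m) => //; rewrite /S2 c2_succ E.
case/yliftP=> x [y [y' [_ /(cedgP hg)[n En] ->]]].
have -> : ye x y y' = ye x (g n) (g n.+1).
  by case/set2_eq: En => [[-> ->]|[-> ->]] //; rewrite ye_sym.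
case: (ham_surj hg x) => m _ <-; apply/setUP.
case E : ((m + n) %% N == N.-1).
  by left; apply/imsetP; exists (g m, g n) => //; rewrite /S2 c2_succ E.
by right; apply/imsetP; exists (g m, g n) => //; rewrite /S1 c1_succ E.
Qed.

Lemma sum_cong a b c d : g a = g c -> g b = g d -> (a + b) %% N = (c + d) %% N.
Proof. by move=> /gE E1 /gE E2; rewrite -modnDm E1 E2 modnDm. Qed.

Lemma tor_disj : [disjoint ledg S2 & ledg S1].
Proof.
apply/mydisjP=> e /imsetP[[x y] _ ->] /imsetP[[x' y'] _].
case: (ham_surj hg x) => a _ <-; case: (ham_surj hg y) => b _ <-.
case: (ham_surj hg x') => c _ <-; case: (ham_surj hg y') => d _ <-.
rewrite /S1 /S2 c1_succ c2_succ.
case: ifP => Eab; case: ifP => Ecd.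
- move=> E; have := xe_ye (esym E); by move/eqP; rewrite (negbTE (gneS c)).
- move/set2_eq=> [[[E1 E2] [_ E3]]|[[E1 E2] [E3 E4]]].
    by rewrite (sum_cong E1 E2) Ecd in Eab.
  by case: (no_back E2 E4).
- move/set2_eq=> [[[E1 E2] [E3 _]]|[[E1 E2] [E3 E4]]].
    by rewrite (sum_cong E1 E2) Ecd in Eab.
  by case: (no_back E1 E3).
- move=> E; have := xe_ye E; by move/eqP; rewrite (negbTE (gneS a)).
Qed.

End Torus.


Section Lift.
Variables (T : finType) (adj : rel T).
Hypothesis adj_sym : symmetric adj.
Hypothesis adj_irr : irreflexive adj.

Definition Xl (f : T -> T) (u : T * T) : T * T := (f u.1, u.2).
Definition Yl (f : T -> T) (u : T * T) : T * T := (u.1, f u.2).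

Variable f : T -> T.
Hypothesis hf : lvl adj f.

Lemma f_ne x : x != f x.
Proof. case: hf => _ [h _]; apply/negP=> /eqP E; have := h x; by rewrite -E adj_irr. Qed.

Lemma Xl_lvl : lvl (padj adj) (Xl f).
Proof.
case: hf => fi [fa fn]; split; last split.
- by move=> [x y] [x' y'] [/fi -> ->].
- by move=> [x y]; rewrite /padj /= fa eqxx.
- move=> [x y]; apply/negP => /eqP [E]; by move: (fn x); rewrite E eqxx.
Qed.

Lemma Yl_lvl : lvl (padj adj) (Yl f).
Proof.
case: hf => fi [fa fn]; split; last split.
- by move=> [x y] [x' y'] [-> /fi ->].
- by move=> [x y]; rewrite /padj /= fa eqxx orbT.
- move=> [x y]; apply/negP => /eqP [E]; by move: (fn y); rewrite E eqxx.
Qed.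

Lemma ledg_f x : [set x; f x] \in ledg f.
Proof. by apply/imsetP; exists x. Qed.

Lemma XY_sub b : ledg (if b then Yl f else Xl f) \subset xlift (ledg f) :|: ylift (ledg f).
Proof.
apply/subsetP=> e /imsetP[[x y] _ ->]; apply/setUP; case: b.
  by right; apply/yliftP; exists x, y, (f y); split => //; [exact: f_ne|exact: ledg_f].
by left; apply/xliftP; exists x, (f x), y; split => //; [exact: f_ne|exact: ledg_f].
Qed.

Lemma XY_cover : xlift (ledg f) :|: ylift (ledg f) \subset ledg (Xl f) :|: ledg (Yl f).
Proof.
apply/subsetP=> e /setUP[].
  case/xliftP=> x [x' [y [_ /imsetP[u _ Eu] ->]]]; apply/setUP; left.
  apply/imsetP; exists (u, y) => //; rewrite /Xl /=.
  case/set2_eq: Eu => [[-> ->]|[-> ->]] //; by rewrite /xe setUC.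
case/yliftP=> x [y [y' [_ /imsetP[u _ Eu] ->]]]; apply/setUP; right.
apply/imsetP; exists (x, u) => //; rewrite /Yl /=.
case/set2_eq: Eu => [[-> ->]|[-> ->]] //; by rewrite /ye setUC.
Qed.

Lemma XY_disj : [disjoint ledg (Xl f) & ledg (Yl f)].
Proof.
apply/mydisjP=> e /imsetP[[x y] _ ->] /imsetP[[x' y'] _ E].
have := xe_ye E; move/eqP; by rewrite (negbTE (f_ne x)).
Qed.

End Lift.


Section Step.
Variables (T : finType) (adj : rel T).
Hypothesis adj_sym : symmetric adj.
Hypothesis adj_irr : irreflexive adj.
Local Notation N := #|T|.
Variables (s t : nat) (G : nat -> nat -> T) (L : nat -> T -> T) (od : bool).
Hypothesis HD : Dec adj s t G L.
Hypothesis od_ok : od -> 0 < s.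

Let g := G s.-1.

Definition s2 := s + s - od.
Definition t2 := t + t + od.
Definition G2 i := if odd i then c1 (G i./2) else c2 (G i./2).
Definition L2 j := if j < t + t then (if odd j then Yl (L j./2) else Xl (L j./2))
                   else hsucc (c1 g).

Lemma walk2 x y i : i <= t ->
  walkL L2 (x, y) (i + i) = (walkL L x i, walkL L y i) /\
  (i < t -> walkL L2 (x, y) (i + i).+1 = (walkL L x i.+1, walkL L y i)).
Proof.
elim: i => [|i IH] hi.
  split => // ht; rewrite /= /L2.
  by have -> : 0 < t + t by lia.
case: IH; first lia.
move=> _ /(_ hi) E1.
have E2 : walkL L2 (x, y) (i.+1 + i.+1) = (walkL L x i.+1, walkL L y i.+1).
  rewrite addSn addnS.
  have -> : walkL L2 (x, y) (i + i).+2 = L2 (i + i).+1 (walkL L2 (x, y) (i + i).+1) by [].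
  rewrite E1 /L2.
  have -> : (i + i).+1 < t + t by lia.
  have -> : odd (i + i).+1 by rewrite addnn /= odd_double.
  have -> : (i + i).+1./2 = i by lia.
  by [].
split => // hi'.
have -> : walkL L2 (x, y) (i.+1 + i.+1).+1 = L2 (i.+1 + i.+1) (walkL L2 (x, y) (i.+1 + i.+1)) by [].
rewrite E2 /L2.
have -> : (i.+1 + i.+1) < t + t by lia.
have -> : odd (i.+1 + i.+1) = false by rewrite addnn odd_double.
have -> : (i.+1 + i.+1)./2 = i.+1 by lia.
by [].
Qed.

Lemma stair x y k : k <= t + t ->
  walkL L2 (x, y) k = (walkL L x (k.+1)./2, walkL L y k./2).
Proof.
move=> hk; have := odd_double_half k; case: (odd k) => /= Hk.
  have hi : k./2 < t by lia.
  have [_ /(_ hi)] := walk2 x y (ltnW hi).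
  have -> : (k./2 + k./2).+1 = k by lia.
  move=> ->; congr pair; congr walkL; lia.
have hi : k./2 <= t by lia.
have [+ _] := walk2 x y hi.
have -> : k./2 + k./2 = k by lia.
move=> ->; congr pair; congr walkL; lia.
Qed.

Lemma pt_S1 (g0 : nat -> T) (hg0 : hamn adj g0) (N3 : 3 < N) a b p q :
  exists p' q', [/\ p' + q' = (p + q).+1, p <= p' & q <= q'] /\
    hsucc (c1 g0) (g0 (a + p), g0 (b + q)) = (g0 (a + p'), g0 (b + q')).
Proof.
rewrite (c1_succ hg0 N3); case: ifP => _.
  by exists p.+1, q; rewrite !addnS; split => //; split; lia.
by exists p, q.+1; rewrite !addnS; split => //; split; lia.
Qed.

Lemma pt_S2 (g0 : nat -> T) (hg0 : hamn adj g0) (N3 : 3 < N) a b p q :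
  exists p' q', [/\ p' + q' = (p + q).+1, p <= p' & q <= q'] /\
    hsucc (c2 g0) (g0 (a + p), g0 (b + q)) = (g0 (a + p'), g0 (b + q')).
Proof.
rewrite (c2_succ hg0 N3); case: ifP => _.
  by exists p, q.+1; rewrite !addnS; split => //; split; lia.
by exists p.+1, q; rewrite !addnS; split => //; split; lia.
Qed.

Lemma step_inv : Inv s2 t2 G2 L2.
Proof.
case: HD => s0 N3 hG hL [hP hI].
have hg : hamn adj g by apply: hG; rewrite ltn_predL.
have EG : G2 s2.-1 = if od then c2 g else c1 g.
  rewrite /s2 /G2; case: (od) => /=.
    have -> : (s + s - 1).-1 = (s.-1 + s.-1) by lia.
    by rewrite addnn odd_double half_double.
  have -> : (s + s - 0).-1 = (s.-1 + s.-1).+1 by lia.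
  have -> : odd (s.-1 + s.-1).+1 by rewrite addnn /= odd_double.
  by have -> : (s.-1 + s.-1).+1./2 = s.-1 by lia.
move=> [x0 y0]; rewrite EG.
have [ix hx] := hI x0; have [iy hy] := hI y0.
set W := walkL L2 (x0, y0).
have stinj : forall k k', k <= t + t -> k' <= t + t -> W k = W k' -> k = k'.
  move=> k k' hk hk'; rewrite /W !stair // => -[E1 E2].
  have := ix _ _ _ _ E1; have := iy _ _ _ _ E2; lia.
case: (ham_surj hg (walkL L x0 t)) => a _ Ea; case: (ham_surj hg (walkL L y0 t)) => b _ Eb.
have Wt : W (t + t) = (g (a + 0), g (b + 0)).
  by rewrite /W stair // !addn0 Ea Eb; congr pair; congr walkL; lia.
have hS : forall n, hsucc g (g n) = g n.+1 by move=> n; rewrite (hsuccE hg).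
have ok : forall p q k, 0 < p + q -> p <= 3 -> q <= 2 -> k <= t + t ->
    (g (a + p), g (b + q)) != W k.
  move=> p q k hpq hp hq hk; rewrite /W stair //; apply/negP => /eqP [E1 E2].
  have hv : k./2 <= t by lia.
  case: q hpq hq E2 => [|[|[|q]]] //= hpq _ E2.
  - rewrite addn0 Eb in E2; have hv' := iy _ _ (leqnn t) hv E2.
    have hu : uphalf k = t by rewrite uphalf_half; lia.
    rewrite -/(uphalf k) hu -Ea -[X in _ = g X]addn0 in E1.
    move/(ham_small hg): E1 => /(_ (leq_ltn_trans hp N3) (ltn_trans (isT : 0 < 3) N3)).
    lia.
  - case: (hy _ hv) => + _; by rewrite -Eb hS -E2 addn1 eqxx.
  - case: (hy _ hv) => _; by rewrite -Eb (hS b) hS -E2 addn2 eqxx.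
have ne : forall p q p' q', p <= 3 -> q <= 3 -> p' <= 3 -> q' <= 3 -> p + q != p' + q' ->
    (g (a + p), g (b + q)) != (g (a + p'), g (b + q')).
  move=> p q p' q' hp hq hp' hq' hpq; apply/negP => /eqP [E1 E2].
  have N3' : 3 < N by [].
  move/(ham_small hg): E1 => /(_ (leq_ltn_trans hp N3') (leq_ltn_trans hp' N3')) E1.
  move/(ham_small hg): E2 => /(_ (leq_ltn_trans hq N3') (leq_ltn_trans hq' N3')) E2.
  by rewrite E1 E2 eqxx in hpq.
have hW1 : W (t + t).+1 = L2 (t + t) (W (t + t)) by [].
have fin : forall P1 P2 P3 p1 q1 p2 q2 p3 q3,
    P1 = (g (a + p1), g (b + q1)) -> P2 = (g (a + p2), g (b + q2)) ->
    P3 = (g (a + p3), g (b + q3)) -> p1 + q1 = 1 -> p2 + q2 = 2 -> p3 + q3 = 3 -> q3 <= 2 ->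
    P1 = W (t + t).+1 ->
    (forall k k', k <= (t + t).+1 -> k' <= (t + t).+1 -> W k = W k' -> k = k') /\
    (forall j, j <= (t + t).+1 -> P2 != W j /\ P3 != W j).
  move=> P1 P2 P3 p1 q1 p2 q2 p3 q3 -> -> -> e1 e2 e3 q3l hP1; split.
    have aux : forall k, k <= t + t -> W k != W (t + t).+1.
      by move=> k0 hk0; rewrite -hP1 eq_sym; apply: ok; lia.
    move=> k k' hk hk' E.
    (have [hk1|hk1] : k <= t + t \/ k = (t + t).+1 by lia);
    (have [hk1'|hk1'] : k' <= t + t \/ k' = (t + t).+1 by lia).
    - exact: stinj.
    - by subst k'; move: (aux k hk1); rewrite E eqxx.
    - by subst k; move: (aux k' hk1'); rewrite -E eqxx.
    - by rewrite hk1 hk1'.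
  move=> j hj; (have [hj1|->] : j <= t + t \/ j = (t + t).+1 by lia).
    by split; apply: ok; lia.
  by rewrite -hP1; split; apply: ne; lia.
have cN : forall x, x %% N == N.-1 -> (x.+1 %% N == N.-1) = false.
  move=> x /eqP hx0; have [-> _] := succ_dm' x N (ltn_trans (isT : 0 < 3) N3) hx0; lia.
rewrite /t2; case: (od) od_ok => od0.
- have -> : t + t + true = (t + t).+1 by rewrite addn1.
  have [p1 [q1 [p2 [q2 [p3 [q3 [E1 E2 E3 [e1 [e2 [e3 q3l]]]]]]]]]] : exists p1 q1 p2 q2 p3 q3,
      [/\ hsucc (c1 g) (g (a + 0), g (b + 0)) = (g (a + p1), g (b + q1)),
          hsucc (c2 g) (g (a + p1), g (b + q1)) = (g (a + p2), g (b + q2)),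
          hsucc (c2 g) (g (a + p2), g (b + q2)) = (g (a + p3), g (b + q3)) &
          p1 + q1 = 1 /\ p2 + q2 = 2 /\ p3 + q3 = 3 /\ q3 <= 2].
    rewrite (c1_succ hg N3); case: ifP => C0.
      have [p2 [q2 [[e2 l2 _] E2]]] := pt_S2 hg N3 a b 1 0.
      have [p3 [q3 [[e3 l3 _] E3]]] := pt_S2 hg N3 a b p2 q2.
      exists 1, 0, p2, q2, p3, q3; split => //; first by rewrite !addn0 addn1.
      lia.
    case C1 : ((a + 0 + (b + 1)) %% N == N.-1).
    + exists 0, 1, 0, 2, 1, 2; split.
      * by rewrite !addn0 addn1.
      * by rewrite (c2_succ hg N3) C1 -addnS.
      * have C2 : ((a + 0 + (b + 2)) %% N == N.-1) = false.
          have -> : a + 0 + (b + 2) = (a + 0 + (b + 1)).+1 by lia.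
          exact: cN.
        by rewrite (c2_succ hg N3) C2 addn0 addn1.
      * lia.
    + have [p3 [q3 [[e3 l3 _] E3]]] := pt_S2 hg N3 a b 1 1.
      exists 0, 1, 1, 1, p3, q3; split.
      * by rewrite !addn0 addn1.
      * by rewrite (c2_succ hg N3) C1 addn0 !addn1.
      * exact: E3.
      * lia.
  have EP1 : W (t + t).+1 = (g (a + p1), g (b + q1)) by rewrite hW1 /L2 ltnn Wt E1.
  rewrite EP1 E2 E3; apply: (fin _ _ _ p1 q1 p2 q2 p3 q3) => //.
- have -> : t + t + false = t + t by rewrite addn0.
  split; first exact: stinj.
  move=> j hj; rewrite Wt.
  case: (pt_S1 hg N3 a b 0 0) => p1 [q1 [[e1 _ _] ->]].
  case: (pt_S1 hg N3 a b p1 q1) => p2 [q2 [[e2 _ _] ->]].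
  split; apply: ok; lia.
Qed.

Definition pi o2 := if o2 < s2 then (o2./2, odd o2)
  else if o2 - s2 < t + t then (s + (o2 - s2)./2, odd (o2 - s2)) else (s.-1, true).
Definition half o (b : bool) : {set {set T * T}} :=
  if o < s then (if b then cedg (c1 (G o)) else cedg (c2 (G o)))
  else (if b then ledg (Yl (L (o - s))) else ledg (Xl (L (o - s)))).

Lemma half_odd_inj x y : x./2 = y./2 -> odd x = odd y -> x = y.
Proof. by move=> E1 E2; rewrite -[x]odd_double_half -[y]odd_double_half E1 E2. Qed.

Lemma odd_xxb x (b : bool) : odd (x + x + b) = b.
Proof. by rewrite oddD addnn odd_double /=; case: b. Qed.

Lemma step_dec : Dec (padj adj) s2 t2 G2 L2.
Proof.
case: (HD) => s0 N3 hG hL [hP hI].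
have hg : hamn adj g by apply: hG; rewrite ltn_predL.
have NN : 3 < #|{: T * T}| by rewrite card_prod; nia.
have hG2 : forall i, i < s2 -> hamn (padj adj) (G2 i).
  move=> i hi; have hi' : i./2 < s by rewrite /s2 in hi; lia.
  by rewrite /G2; case: (odd i); [apply: c1_ham | apply: c2_ham]; apply: hG.
split.
- rewrite /s2; lia.
- exact: NN.
- exact: hG2.
- move=> j hj; rewrite /L2; case: ifP => hj2.
    have hj' : j./2 < t by lia.
    case: (odd j); [apply: Yl_lvl | apply: Xl_lvl] => //; exact: hL.
  apply: hsucc_lvl; [exact: c1_ham | exact: ltnW].
split; last exact: step_inv.
apply: (@part_refine _ _ adj_sym adj_irr (s + t) (fam s G L) _ _ pi half) => //.
- move=> o2 ho2; rewrite /pi /fam /half.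
  case: ifP => h1.
    have h' : o2./2 < s by rewrite /s2 in h1; lia.
    rewrite h' /G2 /=; split; [lia| by case: (odd o2)].
  case: ifP => h2.
    have h' : (s + (o2 - s2)./2 < s) = false by lia.
    rewrite h' addKn /L2 h2 /=; split; [lia | by case: (odd _)].
  have hs : s.-1 < s by lia.
  rewrite hs /L2 h2 /=; split; first lia.
  by rewrite (cedg_ledg (c1_ham hg)).
- move=> o o' ho ho'; rewrite /pi.
  case: (ltnP o s2) => h1; case: (ltnP o' s2) => h1'.
  + move=> [E1 E2]; exact: half_odd_inj.
  + case: ifP => h2 [E1 E2].
      rewrite /s2 in h1 h1'; lia.
    have := odd_double_half o; rewrite E2 -addnn /= => E3.
    rewrite /s2 /t2 in h1 h1' ho ho' h2; move: E3 h1 h1' ho ho' h2; case: (od) => /=; lia.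
  + case: ifP => h2 [E1 E2].
      rewrite /s2 in h1 h1'; lia.
    have := odd_double_half o'; rewrite -E2 -addnn /= => E3.
    rewrite /s2 /t2 in h1 h1' ho ho' h2; move: E3 h1 h1' ho ho' h2; case: (od) => /=; lia.
  + case: ifP => h2; case: ifP => h2' E.
    * case: E => E1 E2.
      have : o - s2 = o' - s2 by apply: half_odd_inj => //; lia.
      lia.
    * case: E => E1 E2; lia.
    * case: E => E1 E2; lia.
    * rewrite /t2 in ho ho'; lia.
- move=> o b ho.
  case: (ltnP o s) => hos.
    case E: (od && (o == s.-1) && b).
      move/andP: E => [/andP [od1 /eqP oe] b1].
      exists (s2 + (t + t)).
        by rewrite /s2 /t2; move: od1; case: (od) => //= _; lia.
      rewrite /pi; have -> : (s2 + (t + t) < s2) = false by lia.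
      by rewrite addKn ltnn oe; move: b1; case: b.
    have hb : o + o + b < s2.
      move/negbT: E; rewrite /s2; case: (od); case: b; rewrite /= ?andbT ?andbF //= => E; lia.
    exists (o + o + b); first by rewrite /t2; lia.
    rewrite /pi hb odd_xxb; congr pair; lia.
  exists (s2 + ((o - s) + (o - s) + b)); first by rewrite /t2; lia.
  rewrite /pi; have -> : (s2 + (o - s + (o - s) + b) < s2) = false by lia.
  rewrite addKn; have -> : (o - s + (o - s) + b < t + t) by lia.
  rewrite odd_xxb; congr pair; lia.
- move=> o b ho; rewrite /half /fam; case: ifP => h.
    have hgo : hamn adj (G o) := hG o h.
    case: b; [rewrite (cedg_ledg (c1_ham hgo)) | rewrite (cedg_ledg (c2_ham hgo))].
      exact: (S1_sub hgo N3).
    exact: (S2_sub hgo N3).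
  have hl : lvl adj (L (o - s)) by apply: hL; lia.
  by case: b; [apply: (XY_sub adj_irr hl true) | apply: (XY_sub adj_irr hl false)].
- move=> o ho; rewrite /half /fam; case: ifP => h.
    have hgo : hamn adj (G o) := hG o h.
    rewrite (cedg_ledg (c1_ham hgo)) (cedg_ledg (c2_ham hgo)).
    exact: (tor_cover hgo N3).
  have hl : lvl adj (L (o - s)) by apply: hL; lia.
  exact: XY_cover.
- move=> o ho; rewrite /half /fam; case: ifP => h.
    have hgo : hamn adj (G o) := hG o h.
    rewrite (cedg_ledg (c1_ham hgo)) (cedg_ledg (c2_ham hgo)).
    exact: (tor_disj hgo N3).
  have hl : lvl adj (L (o - s)) by apply: hL; lia.
  exact: XY_disj.
Qed.

End Step.


Section Transfer.
Variables (T T' : finType) (adj : rel T) (adj' : rel T').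
Variables (f : T' -> T) (fi : T -> T').
Hypothesis fK : cancel f fi.
Hypothesis fiK : cancel fi f.
Hypothesis fadj : forall u v, adj' u v = adj (f u) (f v).

Lemma card_eq : #|T'| = #|T|.
Proof. apply: bij_eq_card; by exists fi. Qed.

Definition FE (e : {set T'}) : {set T} := f @: e.

Lemma FE_inj : injective FE.
Proof. exact: imset_inj (can_inj fK). Qed.

Lemma FE2 a b : FE [set fi a; fi b] = [set a; b].
Proof. by rewrite /FE imsetU1 imset_set1 !fiK. Qed.

Lemma FE2' (x y : T') : FE [set x; y] = [set f x; f y].
Proof. by rewrite /FE imsetU1 imset_set1. Qed.

Lemma ham_tr g : hamn adj g -> hamn adj' (fun n => fi (g n)).
Proof.
case=> h1 h2; split; first by move=> n; rewrite fadj !fiK.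
by move=> n m; rewrite (inj_eq (can_inj fiK)) h2 card_eq.
Qed.

Lemma lvl_tr p : lvl adj p -> lvl adj' (fun u => fi (p (f u))).
Proof.
case=> h1 [h2 h3]; split; last split.
- by move=> u v /(can_inj fiK) /h1 /(can_inj fK).
- by move=> u; rewrite fadj fiK.
- move=> u; rewrite fiK; apply/negP => /eqP E.
  by move: (h3 (f u)); rewrite -{2}E fiK eqxx.
Qed.

Lemma cedg_tr g e : hamn adj g ->
  (e \in cedg (fun n => fi (g n))) = (FE e \in cedg g).
Proof.
move=> hg; have hg' := ham_tr hg.
apply/idP/idP.
  by case/(cedgP hg') => n ->; rewrite FE2; apply/(cedgP hg); exists n.
case/(cedgP hg) => n E; apply/(cedgP hg'); exists n.
by apply: FE_inj; rewrite E FE2.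
Qed.

Lemma ledg_tr p e : (e \in ledg (fun u => fi (p (f u)))) = (FE e \in ledg p).
Proof.
apply/idP/idP.
  by case/imsetP=> u _ ->; rewrite FE2' fiK; apply/imsetP; exists (f u).
case/imsetP=> u _ E; apply/imsetP; exists (fi u) => //.
by apply: FE_inj; rewrite E FE2' !fiK.
Qed.

Lemma ge_tr e : (e \in graph_edges adj') = (FE e \in graph_edges adj).
Proof.
apply/idP/idP.
  by case/geP=> x [y [h ->]]; rewrite FE2'; apply/geP; exists (f x), (f y); rewrite -fadj.
case/geP=> x [y [h E]]; apply/geP; exists (fi x), (fi y); split.
  by rewrite fadj !fiK.
by apply: FE_inj; rewrite E FE2.
Qed.

Lemma part_tr n (F : nat -> {set {set T}}) (F' : nat -> {set {set T'}}) :
  Part adj n F -> (forall o e, o < n -> (e \in F' o) = (FE e \in F o)) -> Part adj' n F'.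
Proof.
move=> [cov dis] HF; split.
  move=> e; rewrite ge_tr cov; split; case=> o ho he; exists o => //; by rewrite ?HF // -?HF.
move=> o o' e ho ho'; rewrite !HF //; exact: dis.
Qed.

Lemma walk_tr L v n : walkL (fun j u => fi (L j (f u))) v n = fi (walkL L (f v) n).
Proof. by elim: n => [|n IH] /=; rewrite ?fK // IH fiK. Qed.

Lemma hsucc_tr g u : hamn adj g -> hsucc (fun n => fi (g n)) u = fi (hsucc g (f u)).
Proof.
move=> hg; have hg' := ham_tr hg.
case: (ham_surj hg' u) => n _ <-.
by rewrite (hsuccE hg' n) fiK (hsuccE hg).
Qed.

Lemma dec_tr s t G L : Dec adj s t G L ->
  Dec adj' s t (fun i n => fi (G i n)) (fun j u => fi (L j (f u))).
Proof.
case=> s0 N3 hG hL [hP hI]; split => //.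
- by rewrite card_eq.
- by move=> i hi; apply: ham_tr; apply: hG.
- by move=> j hj; apply: lvl_tr; apply: hL.
split.
  apply: (part_tr hP) => o e ho; rewrite /fam; case: ifP => h.
    by rewrite cedg_tr //; apply: hG.
  by rewrite ledg_tr.
have hg : hamn adj (G s.-1) by apply: hG; rewrite ltn_predL.
move=> v; case: (hI (f v)) => h1 h2; split.
  move=> a b ha hb; rewrite !walk_tr => /(can_inj fiK); exact: h1.
move=> j hj; rewrite !walk_tr !hsucc_tr // !fiK.
case: (h2 j hj) => n1 n2; split; apply/negP => /eqP /(can_inj fiK) /eqP.
  by rewrite (negbTE n1).
by rewrite (negbTE n2).
Qed.

End Transfer.


Lemma cardsum n (P : pred 'I_n) : #|[set k | P k]| = \sum_(k < n) P k.
Proof.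
rewrite -sum1_card big_mkcond /=; apply: eq_bigr => i _.
by rewrite inE; case: (P i).
Qed.

Lemma card_split a b (P : pred 'I_(a + b)) :
  #|[set k | P k]| = #|[set i | P (lshift b i)]| + #|[set j | P (rshift a j)]|.
Proof. by rewrite !cardsum big_split_ord. Qed.

Lemma cube_iso a : exists (f : cube (a + a) -> (cube a * cube a)%type)
   (fi : (cube a * cube a)%type -> cube (a + a)),
   [/\ cancel f fi, cancel fi f &
     forall u v, cube_adj u v = padj (@cube_adj a) (f u) (f v)].
Proof.
pose f := fun x : cube (a + a) => ([ffun i => x (lshift a i)], [ffun j => x (rshift a j)]) : cube a * cube a.
pose fi := fun p : (cube a * cube a)%type =>
  [ffun k => match split k with inl i => p.1 i | inr j => p.2 j end] : cube (a + a).
exists f, fi; split.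
- move=> x; apply/ffunP => k; rewrite /fi /f ffunE.
  by case: splitP => [i|j] /= E; rewrite ffunE; congr (x _); apply: val_inj.
- move=> [x y]; rewrite /f /fi; congr pair; apply/ffunP => i; rewrite !ffunE.
    by rewrite (unsplitK (inl _ i)).
  by rewrite (unsplitK (inr _ i)).
- move=> u v; rewrite /cube_adj /padj /= card_split.
  have E0 : forall (c : nat) (x y : cube c), (#|[set i | x i != y i]| == 0) = (x == y).
    move=> c x y; rewrite cards_eq0; apply/eqP/eqP => [E|->].
      apply/ffunP => i; apply/eqP; apply/negPn/negP => h.
      have hi : i \in [set i | x i != y i] by rewrite inE h.
      by rewrite E inE in hi.
    by apply/setP => i; rewrite !inE eqxx.
  rewrite -!E0; set c1 := #|_|; set c2 := #|_|.
  have -> : c1 = #|[set i | [ffun i => u (lshift a i)] i != [ffun i => v (lshift a i)] i]|.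
    by apply: eq_card => i; rewrite !inE !ffunE.
  have -> : c2 = #|[set i | [ffun j => u (rshift a j)] i != [ffun j => v (rshift a j)] i]|.
    by apply: eq_card => i; rewrite !inE !ffunE.
  set d1 := #|_|; set d2 := #|_|.
  by case: d1 => [|[|d1]]; case: d2 => [|[|d2]].
Qed.

Definition adj0 : rel (bool * bool) := padj (fun a b : bool => a != b).

Definition g4' (r : nat) : bool * bool :=
  match r with 0 => (false, false) | 1 => (true, false) | 2 => (true, true) | _ => (false, true) end.
Definition g4 (n : nat) := g4' (n %% 4).

Lemma card_bb : #|{: bool * bool}| = 4.
Proof. by rewrite card_prod card_bool. Qed.

Lemma g4_ham : hamn adj0 g4.
Proof.
split.
  move=> n; rewrite /g4.
  have h := ltn_pmod n (isT : 0 < 4).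
  case E : (n %% 4 == 3).
    have [-> _] := succ_dm' n 4 isT (eqP E); by rewrite (eqP E).
  have [-> _] := succ_dm n 4 isT (negbT E).
  by move: h E; case: (n %% 4) => [|[|[|[|r]]]].
move=> n m; rewrite card_bb /g4.
have hn := ltn_pmod n (isT : 0 < 4); have hm := ltn_pmod m (isT : 0 < 4).
by move: hn hm; case: (n %% 4) => [|[|[|[|r]]]]; case: (m %% 4) => [|[|[|[|r']]]].
Qed.

Lemma base_dec : Dec adj0 1 0 (fun _ => g4) (fun _ u => u).
Proof.
split => //.
- by rewrite card_bb.
- by move=> i _; exact: g4_ham.
split.
  split.
    move=> e; split.
      case/geP=> u [v [h ->]]; exists 0 => //; rewrite /fam /=.
      apply/(cedgP g4_ham).
      move: u v h => [[] []] [[] []] //= _;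
      first [ (exists 0; by []) | (exists 0; by rewrite setUC) |
              (exists 1; by []) | (exists 1; by rewrite setUC) |
              (exists 2; by []) | (exists 2; by rewrite setUC) |
              (exists 3; by []) | (exists 3; by rewrite setUC) ].
    case=> o ho; have -> : o = 0 by lia.
    rewrite /fam /= => /(cedgP g4_ham) [n ->]; apply: ge2; by case: g4_ham.
  move=> o o' e ho ho'; lia.
move=> v; split; first by move=> a b; lia.
move=> j hj; have -> : j = 0 by lia.
by apply: (hsucc_ne g4_ham); rewrite card_bb.
Qed.

Lemma iso2 : exists (f : cube 2 -> (bool * bool)%type) (fi : (bool * bool)%type -> cube 2),
  [/\ cancel f fi, cancel fi f & forall u v, cube_adj u v = adj0 (f u) (f v)].
Proof.
pose f := fun x : cube 2 => (x ord0, x ord_max).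
pose fi := fun p : (bool * bool)%type => [ffun i : 'I_2 => if i == ord0 then p.1 else p.2] : cube 2.
have E1 : lift ord0 (ord0 : 'I_1) = ord_max :> 'I_2 by apply: val_inj.
exists f, fi; split.
- move=> x; apply/ffunP => i; rewrite /fi /f ffunE /=.
  case: ifP => [/eqP -> //|h]; congr (x _); apply: val_inj.
  case: i h => [[|[|i]] hi] //= h; by rewrite eqE /= in h.
- by move=> [a b]; rewrite /f /fi !ffunE.
- move=> u v; rewrite /cube_adj cardsum !big_ord_recl big_ord0 E1 /adj0 /padj /f /=.
  by case: (u ord0); case: (v ord0); case: (u ord_max); case: (v ord_max).
Qed.

Lemma cube_sym q : symmetric (@cube_adj q).
Proof.
move=> x y; rewrite /cube_adj; congr (_ == _); apply: eq_card => i; by rewrite !inE eq_sym.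
Qed.

Lemma cube_irr q : irreflexive (@cube_adj q).
Proof.
move=> x; rewrite /cube_adj; have -> : [set i | x i != x i] = set0.
  by apply/setP => i; rewrite !inE eqxx.
by rewrite cards0.
Qed.


Lemma main j t : t < 2 ^ j -> exists G L, Dec (@cube_adj (2 ^ j.+1)) (2 ^ j - t) t G L.
Proof.
elim: j t => [|j IH] t ht.
  have -> : t = 0 by move: ht; rewrite expn0; lia.
  case: iso2 => f [fi [fK fiK fadj]].
  exists (fun i n => fi ((fun _ => g4) i n)), (fun j u => fi ((fun _ (u : bool * bool) => u) j (f u))).
  by rewrite expn0 subn0; apply: (dec_tr fK fiK fadj base_dec).
have ht' : t./2 < 2 ^ j by rewrite expnS in ht; lia.
case: (IH _ ht') => G [L HD].
set s := 2 ^ j - t./2.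
have od_ok : odd t -> 0 < s by rewrite /s; lia.
have HD2 := step_dec (@cube_sym _) (@cube_irr _) HD od_ok.
have Es : s2 s (odd t) = 2 ^ j.+1 - t by rewrite /s2 /s expnS; have := odd_double_half t; lia.
have Et : t2 t./2 (odd t) = t by rewrite /t2; have := odd_double_half t; lia.
rewrite Es Et in HD2.
case: (cube_iso (2 ^ j.+1)) => f [fi [fK fiK fadj]].
have E2 : 2 ^ j.+2 = 2 ^ j.+1 + 2 ^ j.+1 by rewrite expnS mul2n addnn.
rewrite E2.
by eexists; eexists; apply: (dec_tr fK fiK fadj HD2).
Qed.


Section Final.
Variables (T : finType) (adj : rel T).
Local Notation N := #|T|.

Lemma cyc_cedg (g : nat -> T) : hamn adj g ->
  cycle_edges (fun x : 'I_N => g x) = cedg g.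
Proof.
move=> hg; apply: eq_imset => x /=.
by rewrite (ham_mod hg x.+1).
Qed.

Lemma walk_inj_v (L : nat -> T -> T) k : (forall j, j < k -> injective (L j)) ->
  forall n v v', n <= k -> walkL L v n = walkL L v' n -> v = v'.
Proof.
move=> hL; elim=> [|n IH] v v' hn //= E.
have hn' : n < k by lia.
apply: IH; [lia | exact: (hL n hn' _ _ E)].
Qed.

End Final.

Lemma final_gen (T : finType) (adj : rel T) s k G L : Dec adj s k G L ->
 exists (H : 'I_s -> 'I_#|T| -> T) (P : T -> 'I_k.+1 -> T),
  (forall i, ham_cycle adj (H i)) /\ is_dvop adj P /\
  (\bigcup_(i < s) cycle_edges (H i)) :|: dvop_edges P = graph_edges adj /\
  (forall i j, i != j -> [disjoint cycle_edges (H i) & cycle_edges (H j)]) /\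
  (forall i, [disjoint cycle_edges (H i) & dvop_edges P]).
Proof.
case=> s0 N3 hG hL [[cov dis] hI].
exists (fun i (x : 'I_#|T|) => G i x), (fun v (j : 'I_k.+1) => walkL L v j).
have cycE : forall i : 'I_s, cycle_edges (fun x : 'I_#|T| => G i x) = cedg (G i).
  by move=> i; apply: cyc_cedg; apply: hG.
have Linj : forall j, j < k -> injective (L j) by move=> j hj; case: (hL j hj).
have pe : forall v (j : 'I_k), path_edge ((fun v (j0 : 'I_k.+1) => walkL L v j0) v) j =
    [set walkL L v j; L j (walkL L v j)].
  by move=> v j; rewrite /path_edge /=.
have dvE : forall e, e \in dvop_edges (fun v (j : 'I_k.+1) => walkL L v j) <->
    exists2 j, j < k & e \in ledg (L j).
  move=> e; split.
    case/imset2P=> v j _ _ ->; exists j => //; rewrite (pe v j); apply/imsetP; by exists (walkL L v j).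
  case=> j hj /imsetP[u _ ->].
  have winj : injective (fun v => walkL L v j).
    by move=> v v'; apply: (walk_inj_v Linj); exact: ltnW.
  have : u \in codom (fun v => walkL L v j) by apply: inj_card_onto.
  case/codomP=> v ->; apply/imset2P; exists v (Ordinal hj) => //.
have famL : forall j e, j < k -> e \in ledg (L j) -> e \in fam s G L (s + j).
  by move=> j e hj he; rewrite /fam ltnNge leq_addr /= addKn.
have famG : forall (i : 'I_s) e, e \in cedg (G i) -> e \in fam s G L i.
  by move=> i e he; rewrite /fam ltn_ord.
split; last split; last split; last split.
- move=> i; split.
    move=> x y /eqP; rewrite (ham_eq (hG _ (ltn_ord i))) !modn_small ?ltn_ord // => /eqP.
    exact: val_inj.
  move=> x /=; rewrite (ham_mod (hG _ (ltn_ord i)) x.+1); by case: (hG _ (ltn_ord i)).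
- split; last split.
  + move=> v; split.
      move=> a b /= E; apply: val_inj; case: (hI v) => h _.
      exact: (h _ _ (ltn_ord a) (ltn_ord b) E).
    move=> j /=.
    by case: (hL j (ltn_ord j)) => _ [+ _].
  + move=> v v' j j'; rewrite !pe => E.
    have h1 : [set walkL L v j; L j (walkL L v j)] \in fam s G L (s + j).
      apply: famL; first exact: ltn_ord.
      by apply/imsetP; exists (walkL L v j).
    have h2 : [set walkL L v j; L j (walkL L v j)] \in fam s G L (s + j').
      rewrite E; apply: famL; first exact: ltn_ord.
      by apply/imsetP; exists (walkL L v' j').
    have ejj : j = j'.
      apply: val_inj; have := dis _ _ _ _ _ h1 h2; rewrite !ltn_add2l => /(_ (ltn_ord j) (ltn_ord j')).
      by move/addnI.
    subst j'; split => //.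
    apply: (walk_inj_v Linj (n := j)); first exact: ltnW.
    case/set2_eq: E => [[-> //]|[E1 E2]].
    case: (hL j (ltn_ord j)) => _ [_ h3].
    by move: (h3 (walkL L v' j)); rewrite -E1 E2 eqxx.
  + by move=> v.
- apply/setP => e; apply/idP/idP.
    case/setUP.
      case/bigcupP=> i _; rewrite cycE => he; apply/cov; exists (val i).
        exact: (ltn_addr _ (ltn_ord i)).
      exact: famG.
    case/dvE => j hj he; apply/cov; exists (s + j); first by rewrite ltn_add2l.
    exact: famL.
  case/cov => o ho; rewrite /fam; case: ifP => h he; apply/setUP.
    left; apply/bigcupP; exists (Ordinal h) => //; by rewrite cycE.
  by right; apply/dvE; exists (o - s) => //; lia.
- move=> i j hij; rewrite !cycE; apply/mydisjP => e h1 h2.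
  have := dis _ _ _ (ltn_addr _ (ltn_ord i)) (ltn_addr _ (ltn_ord j)) (famG _ _ h1) (famG _ _ h2).
  by move/val_inj/eqP; rewrite (negbTE hij).
- move=> i; rewrite cycE; apply/mydisjP => e h1 /dvE [j hj h2].
  have := dis _ _ _ (ltn_addr _ (ltn_ord i)) _ (famG _ _ h1) (famL _ _ hj h2).
  rewrite ltn_add2l => /(_ hj); have := ltn_ord i; lia.
Qed.

Theorem proposition9 (r k : nat) :
  5 <= r -> k <= 15 ->
  exists (H : 'I_(2 ^ r.-1 - k) -> 'I_#|cube (2 ^ r)| -> cube (2 ^ r))
         (P : cube (2 ^ r) -> 'I_k.+1 -> cube (2 ^ r)),
    (forall i, ham_cycle (@cube_adj (2 ^ r)) (H i)) /\
    is_dvop (@cube_adj (2 ^ r)) P /\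
    (\bigcup_(i < 2 ^ r.-1 - k) cycle_edges (H i)) :|: dvop_edges P
      = graph_edges (@cube_adj (2 ^ r)) /\
    (forall i j, i != j -> [disjoint cycle_edges (H i) & cycle_edges (H j)]) /\
    (forall i, [disjoint cycle_edges (H i) & dvop_edges P]).
Proof.
case: r => [|j] // hr hk.
have hk' : k < 2 ^ j.
  have : 2 ^ 4 <= 2 ^ j by rewrite leq_exp2l //; lia.
  by rewrite (_ : 2 ^ 4 = 16) //; lia.
case: (main hk') => G [L HD].
exact: (final_gen HD).
Qed.
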